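(* Let $H$ be the graph consisting of two triangles $uv_1v_2$ and $uw_1w_2$ sharing exactly the vertex $u$. Let $G$ be a graph with $n$ vertices obtained from $H$ by attaching $k\ge1$ pendant edges (new leaves) to vertices of $H$, none of them to $u$, such that the pendant edges are attached to exactly $d$ of the vertices $v_1,v_2,w_1,w_2$, where $1\le d\le 4$. If $d\ge 2$, then $\operatorname{avm}(G)>\operatorname{avm}(R_n(3,3))$.
   Context: $\operatorname{avm}(G)$ is the average of $|M|$ over all maximal matchings $M$ of $G$ (a matching is maximal if not properly contained in another matching). For $n\ge 6$, $R_n(3,3)$ is the graph obtained from $H$ by attaching $n-5$ pendant edges (new leaves) to $v_1$. *)

(* Defs.v *)
From mathcomp Require Import all_boot all_order all_algebra.
Set Implicit Arguments. Unset Strict Implicit. Unset Printing Implicit Defensive.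
Import GRing.Theory Num.Theory.

(* A simple graph on a finite vertex type T is given by an adjacency relation e
   (assumed symmetric and irreflexive for the graphs used below).
   An edge is a 2-element vertex set {x,y} with e x y. *)
Definition is_edge (T : finType) (e : rel T) (A : {set T}) : bool :=
  [exists x, exists y, e x y && (A == [set x; y])].

Definition is_matching (T : finType) (e : rel T) (M : {set {set T}}) : bool :=
  [forall A in M, is_edge e A] &&
  [forall A in M, forall B in M, (A != B) ==> [disjoint A & B]].

Definition is_maximal_matching (T : finType) (e : rel T) (M : {set {set T}}) : bool :=
  is_matching e M &&
  [forall N : {set {set T}}, (is_matching e N && (M \proper N)) ==> false].

Definition avm (T : finType) (e : rel T) : rat :=
  (\sum_(M : {set {set T}} | is_maximal_matching e M) (#|M|)%:R)
  / (#|[set M : {set {set T}} | is_maximal_matching e M]|)%:R.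

(* The graph H: vertices 0 = u, 1 = v1, 2 = v2, 3 = w1, 4 = w2;
   triangles u v1 v2 and u w1 w2 sharing exactly u. *)
Definition H_adj (i j : 'I_5) : bool :=
  (nat_of_ord i, nat_of_ord j) \in
    [:: (0,1); (1,0); (0,2); (2,0); (1,2); (2,1);
        (0,3); (3,0); (0,4); (4,0); (3,4); (4,3)]%N.

(* H with k pendant edges (new leaves): leaf l is attached to the vertex
   (f l).+1 of H, i.e. to one of v1 (f l = 0), v2 (1), w1 (2), w2 (3);
   in particular never to u. *)
Definition pendant_adj (k : nat) (f : 'I_k -> 'I_4) : rel ('I_5 + 'I_k) :=
  fun x y =>
    match x, y with
    | inl a, inl b => H_adj a b
    | inl a, inr l => nat_of_ord a == (f l).+1
    | inr l, inl a => nat_of_ord a == (f l).+1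
    | inr _, inr _ => false
    end.

Definition R33 (n : nat) : rel ('I_5 + 'I_(n - 5)) :=
  pendant_adj (fun _ : 'I_(n - 5) => (ord0 : 'I_4)).
Arguments R33 n : clear implicits.

(* Main.v *)
Require Import Defs.
From mathcomp Require Import all_boot all_order all_algebra.
From mathcomp Require Import zify.
Import GRing.Theory Num.Theory.
Set Implicit Arguments. Unset Strict Implicit. Unset Printing Implicit Defensive.

Lemma disjP (T : finType) (A B : {set T}) :
  reflect (forall x, x \in A -> x \in B -> False) [disjoint A & B].
Proof.
apply: (iffP pred0P) => [H x xa xb | H x].
  by move: (H x); rewrite /= xa xb.
by apply/negbTE/negP => /andP[]; apply: H.
Qed.

Definition covered (T : finType) (M : {set {set T}}) (x : T) :=
  [exists A in M, x \in A].

Lemma mm_char (T : finType) (e : rel T) (M : {set {set T}}) :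
  is_maximal_matching e M =
  is_matching e M &&
  [forall x, forall y, e x y ==> covered M x || covered M y].
Proof.
rewrite /is_maximal_matching; case Hm: (is_matching e M) => //=.
move: Hm => /andP[HE HD].
apply/idP/idP.
- move/forallP => Hmax; apply/forallP => x; apply/forallP => y; apply/implyP => exy.
  apply/negPn/negP; rewrite negb_or => /andP[nx ny].
  have := Hmax ([set x; y] |: M); rewrite implybF => /negP; apply.
  have nxyM : [set x; y] \notin M.
    apply/negP => H; move/negP: nx; apply; apply/existsP; exists [set x; y].
    by rewrite H set21.
  apply/andP; split; last first.
    apply: properUr; rewrite sub1set //.
  apply/andP; split.
    apply/forallP => A; apply/implyP; rewrite in_setU1 => /orP[/eqP -> | AM].
      by apply/existsP; exists x; apply/existsP; exists y; rewrite exy eqxx.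
    by move/forallP: HE => /(_ A); rewrite AM.
  have key : forall A, A \in M -> [disjoint [set x; y] & A].
    move=> A AM; apply/disjP => z /set2P [] -> zA.
      by move/negP: nx; apply; apply/existsP; exists A; rewrite AM zA.
    by move/negP: ny; apply; apply/existsP; exists A; rewrite AM zA.
  apply/forallP => A; apply/implyP; rewrite in_setU1 => /orP[/eqP -> | AM];
  apply/forallP => B; apply/implyP; rewrite in_setU1 => /orP[/eqP -> | BM];
  apply/implyP => AB.
  - by rewrite eqxx in AB.
  - exact: key.
  - by rewrite disjoint_sym; apply: key.
  - by move/forallP: HD => /(_ A); rewrite AM => /forallP /(_ B); rewrite BM AB.
- move=> Hcov; apply/forallP => N; apply/implyP => /andP[/andP[NE ND] /properP[sMN [A AN AM]]].
  move/forallP: NE => /(_ A); rewrite AN /= => /existsP[x /existsP[y /andP[exy /eqP defA]]].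
  move/forallP: Hcov => /(_ x) /forallP /(_ y); rewrite exy /= => /orP[] /existsP[B /andP[BM zB]].
  + have BN : B \in N by apply: (subsetP sMN).
    have AB : A != B by apply/eqP => AB; rewrite AB BM in AM.
    move/forallP: ND => /(_ A); rewrite AN => /forallP /(_ B); rewrite BN AB /=.
    by move/disjP => H; exfalso; apply: (H x); [rewrite defA set21 | exact: zB].
  + have BN : B \in N by apply: (subsetP sMN).
    have AB : A != B by apply/eqP => AB; rewrite AB BM in AM.
    move/forallP: ND => /(_ A); rewrite AN => /forallP /(_ B); rewrite BN AB /=.
    by move/disjP => H; exfalso; apply: (H y); [rewrite defA set22 | exact: zB].
Qed.

Definition HS := [:: 0;0;1;0;0;3]%N.
Definition HT := [:: 1;2;2;3;4;4]%N.
Definition Hadjn (i j : nat) : bool :=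
  (i, j) \in [:: (0,1); (1,0); (0,2); (2,0); (1,2); (2,1);
        (0,3); (3,0); (0,4); (4,0); (3,4); (4,3)]%N.
Definition C6 := (bool * bool * bool * bool * bool * bool)%type.
Definition bits6 (b : C6) : seq bool :=
  let '(b0,b1,b2,b3,b4,b5) := b in [:: b0;b1;b2;b3;b4;b5].
Definition S4 := (option bool * option bool * option bool * option bool)%type.
Definition sl (s : S4) : seq (option bool) := let '(x0,x1,x2,x3) := s in [:: x0;x1;x2;x3].
Definition inB (b : C6) j := nth false (bits6 b) j.
Definition ends j := [:: nth 0 HS j; nth 0 HT j].
Definition covH (b : C6) (s : S4) (a : nat) : bool :=
  has (fun j => inB b j && (a \in ends j)) (iota 0 6) ||
  has (fun x => (a == x.+1) && (nth None (sl s) x != None)) (iota 0 4).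
Definition V0 (q : C6 * S4) : bool :=
  let b := q.1 in let s := q.2 in
  [&& all (fun j => all (fun j' => (inB b j && inB b j' && (j != j')) ==>
                ~~ has (mem (ends j)) (ends j')) (iota 0 6)) (iota 0 6),
   all (fun x => (nth None (sl s) x != None) ==>
                all (fun j => inB b j ==> (x.+1 \notin ends j)) (iota 0 6)) (iota 0 4),
   all (fun x => nth None (sl s) x != Some false) (iota 0 4) &
   all (fun a => all (fun c => Hadjn a c ==> covH b s a || covH b s c) (iota 0 5)) (iota 0 5)].
Definition Vd (d : seq bool) (q : C6 * S4) : bool :=
  all (fun x => nth false d x ==> covH q.1 q.2 x.+1) (iota 0 4).
Definition V d q := Vd d q && V0 q.
Definition h (q : C6 * S4) :=
  (count id (bits6 q.1) + count (fun o => o != None) (sl q.2),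
   [seq o == Some true | o <- sl q.2]).
Definition lb := [:: true; false].
Definition lo := [:: None; Some true; Some false].
Definition all6 : seq C6 := [seq (p,x) | p <- [seq (p,x) | p <- [seq (p,x) | p <- [seq (p,x) | p <- [seq (p,x) | p <- lb, x <- lb], x <- lb], x <- lb], x <- lb], x <- lb].
Definition all4 : seq S4 := [seq (p,x) | p <- [seq (p,x) | p <- [seq (p,x) | p <- lo, x <- lo], x <- lo], x <- lo].
Definition allq := [seq (p,x) | p <- all6, x <- all4].

Definition L0val := Eval vm_compute in filter V0 allq.
Lemma L0E : filter V0 allq = L0val.
Proof. by vm_compute. Qed.

Lemma filterV d : filter (V d) allq = filter (Vd d) L0val.
Proof. by rewrite -L0E -filter_predI. Qed.

Lemma allI n (P : pred nat) : all P (iota 0 n) -> forall i, i < n -> P i.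
Proof. by move/allP => H i lti; apply: H; rewrite mem_iota. Qed.

Lemma HS_lt j : nth 0 HS j < 5.
Proof. by do 6?[case: j => [|j] //]; rewrite nth_default. Qed.
Lemma HT_lt j : nth 0 HT j < 5.
Proof. by do 6?[case: j => [|j] //]; rewrite nth_default. Qed.
Lemma ends_lt j a : a \in ends j -> a < 5.
Proof. by rewrite !inE => /orP[] /eqP ->; rewrite ?HS_lt ?HT_lt. Qed.

Lemma Hedge_fin : all (fun j => all (fun j' => (nth 0 HS j \in ends j') && (nth 0 HT j \in ends j') ==> (j == j')) (iota 0 6)) (iota 0 6).
Proof. by []. Qed.
Lemma Hadj_fin : all (fun j => Hadjn (nth 0 HS j) (nth 0 HT j)) (iota 0 6).
Proof. by []. Qed.
Lemma Hadj_sym_fin : all (fun a => all (fun b => Hadjn a b == Hadjn b a) (iota 0 5)) (iota 0 5).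
Proof. by []. Qed.
Lemma Hadj_lt a b : Hadjn a b -> (a < 5) && (b < 5).
Proof.
rewrite /Hadjn => H; do 12?[case/predU1P: H => [[-> ->]|H] //].
Qed.
Lemma Hadj_edge_fin : all (fun a => all (fun b => Hadjn a b ==> has (fun j => ((a == nth 0 HS j) && (b == nth 0 HT j)) || ((a == nth 0 HT j) && (b == nth 0 HS j))) (iota 0 6)) (iota 0 5)) (iota 0 5).
Proof. by []. Qed.

Arguments iota : simpl never.

Section G.
Variables (k : nat) (f : 'I_k -> 'I_4).
Local Notation T := ('I_5 + 'I_k)%type.
Local Notation e := (pendant_adj f).

Definition L4 := (option 'I_k * option 'I_k * option 'I_k * option 'I_k)%type.
Definition cl (c : L4) : seq (option 'I_k) := let '(x0,x1,x2,x3) := c in [:: x0;x1;x2;x3].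
Definition cv (c : L4) x := nth None (cl c) x.
Definition pf (x : nat) (l : 'I_k) := (val (f l) == x).
Definition shs (c : L4) : S4 :=
  let '(x0,x1,x2,x3) := c in (omap (pf 0) x0, omap (pf 1) x1, omap (pf 2) x2, omap (pf 3) x3).
Definition shq (q : C6 * L4) : C6 * S4 := (q.1, shs q.2).

Lemma nth_shs c x : nth None (sl (shs c)) x = omap (pf x) (cv c x).
Proof.
case: c => [[[c0 c1] c2] c3]; case: x => [|[|[|[|x]]]] //.
by rewrite /cv !nth_default.
Qed.

Definition Hv (a : nat) : T := inl (inord a).
Lemma Hv_inj a b : a < 5 -> b < 5 -> (Hv a == Hv b) = (a == b).
Proof.
move=> ha hb; apply/eqP/eqP => [E|-> //].
by have := congr1 (fun t : T => if t is inl z then val z else 0) E; rewrite /= !inordK.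
Qed.

Definition Hedge (j : nat) : {set T} := [set Hv (nth 0 HS j); Hv (nth 0 HT j)].
Definition Ledge (x : nat) (l : 'I_k) : {set T} := [set Hv x.+1; inr l].

Definition dec (q : C6 * L4) : {set {set T}} :=
  [set Hedge (val j) | j : 'I_6 & inB q.1 j] :|:
  [set Ledge (val p.1) p.2 | p : 'I_4 * 'I_k & cv q.2 p.1 == Some p.2].

Lemma mem_Hv_Hedge a j : a < 5 -> (Hv a \in Hedge j) = (a \in ends j).
Proof. by move=> ha; rewrite !inE !Hv_inj ?HS_lt ?HT_lt. Qed.
Lemma inr_Hedge l j : (inr l \in Hedge j) = false.
Proof. by rewrite !inE. Qed.
Lemma mem_Hv_Ledge a x l : a < 5 -> x < 4 -> (Hv a \in Ledge x l) = (a == x.+1).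
Proof. by move=> ha hx; rewrite !inE Hv_inj // orbF. Qed.
Lemma mem_inr_Ledge l' x l : (inr l' \in Ledge x l) = (l' == l).
Proof. by rewrite !inE. Qed.

Lemma Hedge_inj j j' : j < 6 -> j' < 6 -> Hedge j = Hedge j' -> j = j'.
Proof.
move=> hj hj' E.
have h1 : nth 0 HS j \in ends j' by rewrite -mem_Hv_Hedge ?HS_lt // -E !inE eqxx.
have h2 : nth 0 HT j \in ends j' by rewrite -mem_Hv_Hedge ?HT_lt // -E !inE eqxx orbT.
by move: (allI Hedge_fin hj) => /allI /(_ _ hj'); rewrite h1 h2 => /eqP.
Qed.

Lemma Hedge_Ledge j x l : Hedge j != Ledge x l.
Proof. by apply/eqP => E; move: (mem_inr_Ledge l x l); rewrite -E inr_Hedge eqxx. Qed.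

Lemma Ledge_inj x l x' l' : x < 4 -> x' < 4 -> Ledge x l = Ledge x' l' -> x = x' /\ l = l'.
Proof.
move=> hx hx' E.
have H1 : Hv x'.+1 \in Ledge x l by rewrite E !inE eqxx.
have H2 : inr l' \in Ledge x l by rewrite E !inE eqxx orbT.
rewrite mem_Hv_Ledge // in H1; rewrite mem_inr_Ledge in H2.
by move/eqP: H1 => [->]; move/eqP: H2 => ->.
Qed.


Lemma card_ord_count n (P : pred nat) : #|[pred j : 'I_n | P j]| = count P (iota 0 n).
Proof.
rewrite cardE /enum_mem -enumT size_filter -val_enum_ord count_map.
by apply: eq_count => j.
Qed.

Lemma card_set_count n (P : pred nat) : #|[set j : 'I_n | P j]| = count P (iota 0 n).
Proof. by rewrite -card_ord_count; apply: eq_card => j; rewrite inE. Qed.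

Lemma cv_lt c x l : cv c x = Some l -> x < 4.
Proof. by rewrite /cv; case: c => [[[c0 c1] c2] c3]; case: x => [|[|[|[|x]]]] //; rewrite nth_default. Qed.

Lemma in_dec q A : (A \in dec q) =
  [exists j : 'I_6, inB q.1 j && (A == Hedge j)] ||
  [exists p : 'I_4 * 'I_k, (cv q.2 p.1 == Some p.2) && (A == Ledge p.1 p.2)].
Proof.
rewrite in_setU; congr orb.
  apply/imsetP/existsP => [[j jin ->]|[j /andP[jB /eqP ->]]].
    by exists j; rewrite eqxx andbT; rewrite inE in jin.
  by exists j; rewrite ?inE.
apply/imsetP/existsP => [[j jin ->]|[j /andP[jB /eqP ->]]].
  by exists j; rewrite eqxx andbT; rewrite inE in jin.
by exists j; rewrite ?inE.
Qed.

Lemma inl_Hv (a : 'I_5) : inl a = Hv a.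
Proof. by rewrite /Hv inord_val. Qed.

Lemma covered_Hv q a : a < 5 -> covered (dec q) (Hv a) = covH q.1 (shs q.2) a.
Proof.
move=> ha; rewrite /covered; apply/existsP/orP.
- case=> A /andP[]; rewrite in_dec => /orP[] /existsP [j /andP[jB /eqP ->]] hA.
    left; apply/hasP; exists (val j); first by rewrite mem_iota /=.
    by rewrite jB -mem_Hv_Hedge.
  right; apply/hasP; exists (val j.1); first by rewrite mem_iota /=.
  rewrite mem_Hv_Ledge // in hA; rewrite hA nth_shs (eqP jB) //.
- case => /hasP [j jin /andP[jB ja]]; rewrite mem_iota /= in jin.
    exists (Hedge j); rewrite in_dec mem_Hv_Hedge // ja andbT; apply/orP; left.
    by apply/existsP; exists (Ordinal jin); rewrite jB eqxx.
  move/eqP: jB => ->; move: ja; rewrite nth_shs.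
  case E: (cv q.2 j) => [l|] // _.
  exists (Ledge j l); rewrite in_dec !inE eqxx andbT; apply/orP; right.
  by apply/existsP; exists (Ordinal jin, l); rewrite /= E !eqxx.
Qed.

Lemma covered_inr q l : covered (dec q) (inr l) = [exists x : 'I_4, cv q.2 x == Some l].
Proof.
rewrite /covered; apply/existsP/existsP.
- case=> A /andP[]; rewrite in_dec => /orP[] /existsP [j /andP[jB /eqP ->]] hA.
    by rewrite inr_Hedge in hA.
  by rewrite mem_inr_Ledge in hA; exists j.1; rewrite (eqP hA).
- case=> x hx; exists (Ledge x l); rewrite mem_inr_Ledge eqxx andbT in_dec.
  by apply/orP; right; apply/existsP; exists (x, l); rewrite /= hx eqxx.
Qed.

Lemma eHH (a b : 'I_5) : e (inl a) (inl b) = Hadjn a b.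
Proof. by []. Qed.

Lemma e_sym x y : e x y = e y x.
Proof.
case: x => [a|l]; case: y => [b|l'] //=.
have H := allI Hadj_sym_fin (ltn_ord a).
have := allI H (ltn_ord b).
by rewrite /Hadjn /H_adj => /eqP.
Qed.

Lemma edge_Hedge j : j < 6 -> is_edge e (Hedge j).
Proof.
move=> hj; apply/existsP; exists (Hv (nth 0 HS j)); apply/existsP; exists (Hv (nth 0 HT j)).
rewrite eqxx andbT eHH !inordK ?HS_lt ?HT_lt //; exact: (allI Hadj_fin hj).
Qed.

Lemma edge_Ledge x l : val (f l) = x -> is_edge e (Ledge x l).
Proof.
move=> hx; apply/existsP; exists (Hv x.+1); apply/existsP; exists (inr l).
rewrite eqxx andbT /= inordK; first by rewrite hx.
by rewrite -hx ltnS ltn_ord.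
Qed.

Lemma in_Hedge z j : z \in Hedge j -> exists2 a, z = Hv a & (a < 5) && (a \in ends j).
Proof.
case/set2P => ->; [exists (nth 0 HS j) | exists (nth 0 HT j)] => //;
by rewrite ?HS_lt ?HT_lt !inE eqxx ?orbT.
Qed.

Lemma edge_split A : is_edge e A -> exists p, exists2 p', e p p' & A = [set p; p'].
Proof. by case/existsP => p /existsP [p' /andP[epp /eqP ->]]; exists p, p'. Qed.

Variable d : seq bool.
Hypothesis hd : forall x, x < 4 -> nth false d x = [exists l : 'I_k, val (f l) == x].

Lemma ltS (x : 'I_4) : x.+1 < 5.
Proof. exact: ltn_ord x. Qed.

Lemma hd_leaf l : nth false d (f l).
Proof. by rewrite hd ?ltn_ord //; apply/existsP; exists l. Qed.

Lemma covered_inl q (a : 'I_5) : covered (dec q) (inl a) = covH q.1 (shs q.2) a.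
Proof. by rewrite inl_Hv covered_Hv. Qed.

Lemma dec_mm q : V d (shq q) -> is_maximal_matching e (dec q).
Proof.
case: q => b c; rewrite /V /V0 /Vd /shq => /andP[HVd /and4P[H1 H2 H3 H4]].
have LC : forall x l, cv c x = Some l -> val (f l) = x.
  move=> x l E; have hx := cv_lt E.
  by move: (allI H3 hx) => /=; rewrite nth_shs E /= /pf; case: (val (f l) =P x).
rewrite mm_char; apply/andP; split; [apply/andP; split|].
- apply/forallP => A; apply/implyP; rewrite in_dec => /orP[] /existsP[j /andP[jB /eqP ->]].
    exact: edge_Hedge.
  by apply: edge_Ledge; apply: LC; apply/eqP.
- apply/forallP => A; apply/implyP => HA; apply/forallP => B; apply/implyP => HB.
  apply/implyP => AB; apply/disjP => z zA zB.
  move: HA HB AB zA zB; rewrite !in_dec => /orP[] /existsP[j /andP[jB /eqP ->]]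
    /orP[] /existsP[j' /andP[jB' /eqP ->]] AB zA zB.
  + have jj : val j != val j' by apply: contra AB => /eqP ->.
    case: (in_Hedge zA) => a za /andP[ha aj].
    rewrite za mem_Hv_Hedge // in zB.
    move: (allI H1 (ltn_ord j)) => /allI /(_ _ (ltn_ord j')) /implyP.
    rewrite jB jB' jj => /(_ isT) /negP; apply; apply/hasP; exists a => //.
  + case: (in_Hedge zA) => a za /andP[ha aj].
    rewrite za mem_Hv_Ledge // in zB.
    move: (allI H2 (ltn_ord j'.1)) => /implyP; rewrite nth_shs (eqP jB') => /(_ isT) /allI /(_ _ (ltn_ord j)) /implyP /(_ jB).
    by rewrite -(eqP zB) aj.
  + case: (in_Hedge zB) => a za /andP[ha aj].
    rewrite za mem_Hv_Ledge // in zA.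
    move: (allI H2 (ltn_ord j.1)) => /implyP; rewrite nth_shs (eqP jB) => /(_ isT) /allI /(_ _ (ltn_ord j')) /implyP /(_ jB').
    by rewrite -(eqP zA) aj.
  + move/eqP: jB => jB; move/eqP: jB' => jB'.
    case/set2P: zA => zdef; rewrite zdef in zB.
      rewrite (mem_Hv_Ledge _ (ltS j.1) (ltn_ord j'.1)) in zB; move/eqP: zB => [] /val_inj ej.
      by move: AB jB'; rewrite -ej jB => /eqP AB [] el; apply: AB; rewrite el.
    rewrite mem_inr_Ledge in zB; move/eqP: zB => el.
    have ej : j.1 = j'.1 by apply: ord_inj; rewrite -(LC _ _ jB) -(LC _ _ jB') el.
    by move/eqP: AB; apply; rewrite ej el.
- apply/forallP => x; apply/forallP => y; apply/implyP.
  case: x => [a|l]; case: y => [a'|l'] // exy.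
  + rewrite !covered_inl /=; rewrite eHH in exy.
    by move: (allI H4 (ltn_ord a)) => /allI /(_ _ (ltn_ord a')); rewrite exy.
  + move/eqP: exy => ea; apply/orP; left.
    rewrite covered_inl /=; move: (allI HVd (ltn_ord (f l'))).
    by rewrite hd_leaf /= ea.
  + move/eqP: exy => ea; apply/orP; right.
    rewrite covered_inl /=; move: (allI HVd (ltn_ord (f l))).
    by rewrite hd_leaf /= ea.
Qed.

Lemma e_irr x : e x x = false.
Proof.
by case: x => [[[|[|[|[|[|a]]]]] ha]|l].
Qed.

Lemma edge_pair p p' u w : e p p' -> [set p; p'] = [set u; w] -> e u w.
Proof.
move=> epp Ep.
have uin : u \in [set p; p'] by rewrite Ep set21.
have win : w \in [set p; p'] by rewrite Ep set22.
have pin : p \in [set u; w] by rewrite -Ep set21.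
have p'in : p' \in [set u; w] by rewrite -Ep set22.
case/set2P: uin => Eu; case/set2P: win => Ew; subst u w => //.
- by case/set2P: p'in => E; rewrite E e_irr in epp.
- by rewrite e_sym.
- by case/set2P: pin => E; rewrite E e_irr in epp.
Qed.

Lemma Hadj_edge a a' : Hadjn a a' -> exists2 j, j < 6 & [set Hv a; Hv a'] = Hedge j.
Proof.
move=> H; case/andP: (Hadj_lt H) => ha ha'.
move: (allI Hadj_edge_fin ha) => /allI /(_ _ ha') /implyP /(_ H) /hasP [j].
rewrite mem_iota /= => hj /orP[] /andP[/eqP -> /eqP ->]; exists j => //.
by rewrite /Hedge setUC.
Qed.

Lemma mm_dec M : is_maximal_matching e M -> exists2 q, V d (shq q) & M = dec q.
Proof.
rewrite mm_char => /andP[/andP[HE HD] HC].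
have Medge : forall A, A \in M -> is_edge e A.
  by move=> A AM; move/forallP: HE => /(_ A); rewrite AM.
have Muniq : forall A B z, A \in M -> B \in M -> z \in A -> z \in B -> A = B.
  move=> A B z AM BM zA zB; apply/eqP; apply/negP => /negP AB.
  move/forallP: HD => /(_ A); rewrite AM => /forallP /(_ B); rewrite BM AB /=.
  by move/disjP => /(_ z zA zB).
pose pl := fun x => [pick l | Ledge x l \in M].
pose b : C6 := (Hedge 0 \in M, Hedge 1 \in M, Hedge 2 \in M, Hedge 3 \in M, Hedge 4 \in M, Hedge 5 \in M).
pose c : L4 := (pl 0, pl 1, pl 2, pl 3).
have Hb : forall j, j < 6 -> inB b j = (Hedge j \in M) by case=> [|[|[|[|[|[|]]]]]].
have Hc : forall x, cv c x = if x < 4 then pl x else None.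
  by case=> [|[|[|[|x]]]] //; rewrite /cv nth_default.
have Hpl : forall x l, x < 4 -> (cv c x == Some l) = (Ledge x l \in M).
  move=> x l hx; rewrite Hc hx /pl; case: pickP => [l' Hl'|H].
    apply/eqP/idP => [[<-] //| Hl]; congr Some.
    have := Muniq _ _ (Hv x.+1) Hl' Hl; rewrite !inE !eqxx => /(_ isT isT).
    by case/Ledge_inj.
  by rewrite H.
have LC : forall x l, cv c x = Some l -> val (f l) = x.
  move=> x l E; have hx := cv_lt E; move/eqP: E; rewrite Hpl // => /Medge /edge_split [p [p' epp E]].
  have := edge_pair epp (esym E) => /=.
  by rewrite inordK // => /eqP [].
have Mdec : M = dec (b, c).
  apply/setP => A; rewrite in_dec; apply/idP/idP.
  - move=> AM; have [p [p' epp Adef]] := edge_split (Medge _ AM).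
    case: p p' epp Adef => [a|l] [a'|l'] // epp Adef.
    + rewrite eHH in epp; have [j hj Ej] := Hadj_edge epp.
      apply/orP; left; apply/existsP; exists (Ordinal hj).
      by rewrite /= Hb // -Ej -!inl_Hv -Adef AM eqxx.
    + move/eqP: epp => ea; apply/orP; right; apply/existsP; exists (f l', l').
      have AL : A = Ledge (f l') l' by rewrite Adef inl_Hv ea.
      by rewrite /= Hpl ?ltn_ord // -AL AM AL eqxx.
    + move/eqP: epp => ea; apply/orP; right; apply/existsP; exists (f l, l).
      have AL : A = Ledge (f l) l by rewrite Adef setUC inl_Hv ea.
      by rewrite /= Hpl ?ltn_ord // -AL AM AL eqxx.
  - case/orP => /existsP [j /andP[jB /eqP ->]].
      by rewrite -Hb.
    by rewrite -Hpl.
exists (b, c) => //.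
apply/andP; split.
  apply/allP => x; rewrite mem_iota => /andP[_ hx].
  change (nth false d x ==> covH b (shs c) x.+1).
  apply/implyP; rewrite hd // => /existsP [l /eqP fl].
  have ee : e (Hv x.+1) (inr l) by rewrite /= inordK // fl.
  move/forallP: HC => /(_ (Hv x.+1)) /forallP /(_ (inr l)); rewrite ee /= Mdec.
  rewrite covered_Hv // covered_inr => /orP[//|/existsP[x' /eqP cx']].
  have ex : nat_of_ord x' = x by rewrite -(LC _ _ cx') fl.
  apply/orP; right; apply/hasP; exists x; first by rewrite mem_iota.
  rewrite eqxx /=; change (nth None (sl (shs c)) x != None); by rewrite nth_shs -ex cx'.
apply/and4P; split.
- apply/allP => j; rewrite mem_iota => /andP[_ hj]; apply/allP => j'; rewrite mem_iota => /andP[_ hj'].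
  change (inB b j && inB b j' && (j != j') ==> ~~ has (mem (ends j)) (ends j')).
  apply/implyP => /andP[/andP[bj bj'] jj]; apply/negP => /hasP [a aj' aj].
  rewrite Hb // in bj; rewrite Hb // in bj'.
  have ha := ends_lt aj'.
  have := Muniq _ _ (Hv a) bj bj'; rewrite !mem_Hv_Hedge // => /(_ aj aj') /Hedge_inj.
  by move=> /(_ hj hj') ejj; rewrite ejj eqxx in jj.
- apply/allP => x; rewrite mem_iota => /andP[_ hx].
  change ((nth None (sl (shs c)) x != None) ==> all (fun j => inB b j ==> (x.+1 \notin ends j)) (iota 0 6)).
  rewrite nth_shs; case E: (cv c x) => [l|] //; apply/implyP => _.
  apply/allP => j; rewrite mem_iota => /andP[_ hj]; apply/implyP; rewrite Hb // => bj.
  apply/negP => xj; move/eqP: E; rewrite Hpl // => lM.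
  have := Muniq _ _ (Hv x.+1) bj lM; rewrite mem_Hv_Hedge // mem_Hv_Ledge // eqxx => /(_ xj isT) /eqP.
  by rewrite (negbTE (Hedge_Ledge _ _ _)).
- apply/allP => x; rewrite mem_iota => /andP[_ hx].
  change (nth None (sl (shs c)) x != Some false).
  rewrite nth_shs; case E: (cv c x) => [l|] //=.
  by rewrite /pf (LC _ _ E) eqxx.
- apply/allP => a; rewrite mem_iota => /andP[_ ha]; apply/allP => a'; rewrite mem_iota => /andP[_ ha'].
  change (Hadjn a a' ==> covH b (shs c) a || covH b (shs c) a').
  apply/implyP => H.
  have ee : e (Hv a) (Hv a') by rewrite eHH !inordK.
  move/forallP: HC => /(_ (Hv a)) /forallP /(_ (Hv a')); rewrite ee /= Mdec.
  by rewrite !covered_Hv.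
Qed.

Lemma Hedge_in_dec q j : j < 6 -> (Hedge j \in dec q) = inB q.1 j.
Proof.
move=> hj; rewrite in_dec; apply/orP/idP.
- case=> /existsP [j' /andP[jB /eqP E]].
    by rewrite (Hedge_inj hj (ltn_ord j') E).
  by move: (Hedge_Ledge j j'.1 j'.2); rewrite E eqxx.
- by move=> jB; left; apply/existsP; exists (Ordinal hj); rewrite jB eqxx.
Qed.

Lemma Ledge_in_dec q x l : x < 4 -> (Ledge x l \in dec q) = (cv q.2 x == Some l).
Proof.
move=> hx; rewrite in_dec; apply/orP/idP.
- case=> /existsP [p /andP[pB /eqP E]].
    by move: (Hedge_Ledge p x l); rewrite E eqxx.
  by case: (Ledge_inj hx (ltn_ord p.1) E) => -> ->.
- by move=> cB; right; apply/existsP; exists (Ordinal hx, l); rewrite cB eqxx.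
Qed.

Lemma dec_inj : injective dec.
Proof.
move=> [b c] [b' c'] E.
have eb : bits6 b = bits6 b'.
  apply: (@eq_from_nth _ false); first by case: b {E} => [[[[[? ?] ?] ?] ?] ?]; case: b' => [[[[[? ?] ?] ?] ?] ?].
  move=> j hj; have hj6 : j < 6 by case: b {E} hj => [[[[[? ?] ?] ?] ?] ?].
  by move: (Hedge_in_dec (b, c) hj6) (Hedge_in_dec (b', c') hj6); rewrite E => -> .
have ec : cl c = cl c'.
  apply: (@eq_from_nth _ None); first by case: c {E} => [[[? ?] ?] ?]; case: c' => [[[? ?] ?] ?].
  move=> x hx; have hx4 : x < 4 by case: c {E} hx => [[[? ?] ?] ?].
  have H := fun l => Ledge_in_dec (b, c) l hx4; have H' := fun l => Ledge_in_dec (b', c') l hx4.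
  rewrite E in H; rewrite -/(cv c x) -/(cv c' x).
  case E1: (cv c x) => [l|]; case E2: (cv c' x) => [l'|] //.
  - by move: (H l) (H' l); rewrite /= E1 E2 eqxx => -> /esym /eqP [->].
  - by move: (H l); rewrite (H' l) /= E1 E2 eqxx.
  - by move: (H l'); rewrite (H' l') /= E1 E2 eqxx.
congr pair.
  by case: b b' eb {E} => [[[[[? ?] ?] ?] ?] ?] [[[[[? ?] ?] ?] ?] ?] [-> -> -> -> -> ->].
by case: c c' ec {E} => [[[? ?] ?] ?] [[[? ?] ?] ?] [-> -> -> ->].
Qed.

Lemma card_dec q : #|dec q| = count id (bits6 q.1) + count (fun o => o != None) (cl q.2).
Proof.
case: q => b c; rewrite /dec cardsU.
have -> : #|[set Hedge (val j) | j : 'I_6 & inB (b, c).1 j] :&: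
           [set Ledge (val p.1) p.2 | p : 'I_4 * 'I_k & cv (b, c).2 p.1 == Some p.2]| = 0.
  apply/eqP; rewrite cards_eq0; apply/eqP/setP => A; rewrite !inE.
  apply/negP => /andP[/imsetP [j _ ->] /imsetP [p _ E]].
  by move: (Hedge_Ledge j p.1 p.2); rewrite E eqxx.
rewrite subn0; congr addn.
  rewrite card_in_imset; last first.
    by move=> j j' _ _ /Hedge_inj E; apply: val_inj; apply: E; apply: ltn_ord.
  rewrite card_set_count /=.
  by case: b => [[[[[? ?] ?] ?] ?] ?].
rewrite card_in_imset; last first.
  move=> p p' _ _ /= E; case: (Ledge_inj (ltn_ord p.1) (ltn_ord p'.1) E) => e1 e2.
  by case: p p' e1 e2 {E} => [x l] [x' l'] /= /val_inj -> ->.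
rewrite (_ : #|_| = #|[pred x : 'I_4 | cv c x != None]|).
  rewrite (card_ord_count 4 (fun n => cv c n != None)).
  by case: c => [[[c0 c1] c2] c3].
rewrite -(@card_in_imset _ _ (fun p : 'I_4 * 'I_k => p.1)).
  apply: eq_card => x; rewrite inE; apply/imsetP/idP => [[p pin ->]|cx].
    by rewrite inE /= in pin; rewrite (eqP pin).
  case E: (cv c x) cx => [l|] // _; exists (x, l) => //; by rewrite inE /= E.
move=> [x l] [x' l']; rewrite !inE /= => E1 E2 ex; subst x'.
by move: E2; rewrite (eqP E1) => /eqP [->].
Qed.

End G.

Lemma enum_full (A : finType) (l : seq A) (F : A -> nat) :
  uniq l -> (forall x, x \in l) -> \sum_(x : A) F x = \sum_(x <- l) F x.
Proof.
move=> ul ml; rewrite -big_enum /=.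
rewrite (eq_bigl (fun x => x \in A)) //.
apply: perm_big; apply: uniq_perm => //; first exact: enum_uniq.
by move=> x; rewrite mem_enum ml.
Qed.

Lemma enum_pair (A B : finType) (lA : seq A) (lB : seq B) :
  (forall F, \sum_(x : A) F x = \sum_(x <- lA) F x) ->
  (forall F, \sum_(y : B) F y = \sum_(y <- lB) F y) ->
  forall F, \sum_(p : A * B) F p = \sum_(p <- [seq (x, y) | x <- lA, y <- lB]) F p.
Proof.
move=> HA HB F; rewrite big_allpairs -HA.
rewrite (eq_bigr (fun x => \sum_(y : B) F (x, y))); last by move=> x _; rewrite HB.
rewrite pair_big /=; apply: eq_bigr => -[x y] _ //.
Qed.

Lemma sum_bool F : \sum_(x : bool) F x = \sum_(x <- lb) F x.
Proof. by apply: enum_full => // -[]. Qed.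
Lemma sum_ob F : \sum_(x : option bool) F x = \sum_(x <- lo) F x.
Proof. by apply: enum_full => // -[[]|]. Qed.

Lemma sum_allq F : \sum_(p : C6 * S4) F p = \sum_(p <- allq) F p.
Proof.
rewrite /allq /all6 /all4.
by do ![apply: enum_pair | apply: sum_bool | apply: sum_ob].
Qed.

Lemma fiber_sum (A B : finType) (phi : A -> B) (G : B -> nat) :
  \sum_(a : A) G (phi a) = \sum_(b : B) G b * #|[set a | phi a == b]|.
Proof.
rewrite (partition_big phi predT) //; apply: eq_bigr => b _.
rewrite (eq_bigr (fun _ => G b)); last by move=> a /andP[_ /eqP ->].
by rewrite sum_nat_cond_const mulnC.
Qed.

Section S.
Variables (k : nat) (f : 'I_k -> 'I_4) (d : seq bool).
Hypothesis hd : forall x, x < 4 -> nth false d x = [exists l : 'I_k, val (f l) == x].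

Definition hsz (p : C6 * S4) := (h p).1.
Definition cnt x (o : option bool) := #|[set y : option 'I_k | omap (pf f x) y == o]|.
Definition mult (p : C6 * S4) :=
  let '(x0,x1,x2,x3) := p.2 in cnt 0 x0 * cnt 1 x1 * cnt 2 x2 * cnt 3 x3.
Definition acnt x := #|[set l : 'I_k | pf f x l]|.
Definition mw (m : seq bool) :=
  (if nth false m 0 then acnt 0 else 1) * (if nth false m 1 then acnt 1 else 1) *
  (if nth false m 2 then acnt 2 else 1) * (if nth false m 3 then acnt 3 else 1).

Lemma fiber_card p : #|[set q : C6 * L4 k | shq f q == p]| = mult p.
Proof.
case: p => b [[[s0 s1] s2] s3].
pose S i s := [set y : option 'I_k | omap (pf f i) y == s].
rewrite (_ : [set q | shq f q == (b, (s0,s1,s2,s3))] =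
   setX [set b] (setX (setX (setX (S 0 s0) (S 1 s1)) (S 2 s2)) (S 3 s3))).
  by rewrite !cardsX cards1 mul1n /mult /= /cnt.
apply/setP => -[b' [[[c0 c1] c2] c3]]; rewrite !inE /shq /shs /= !xpair_eqE.
by rewrite !andbA.
Qed.

Lemma count_shs c : count (fun o => o != None) (sl (shs f c)) = count (fun o => o != None) (cl c).
Proof. by case: c => [[[c0 c1] c2] c3]; case: c0; case: c1; case: c2; case: c3. Qed.

Lemma cnt_None x : cnt x None = 1.
Proof.
rewrite /cnt (_ : [set y | _] = [set None]) ?cards1 //.
by apply/setP => -[y|]; rewrite !inE.
Qed.

Lemma cnt_true x : cnt x (Some true) = acnt x.
Proof.
rewrite /cnt (_ : [set y | _] = Some @: [set l : 'I_k | pf f x l]).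
  by rewrite card_imset //; move=> ? ? [].
apply/setP => -[y|]; rewrite !inE /=.
  apply/eqP/imsetP => [[H]|[l]]; first by exists y; rewrite // inE H.
  by rewrite inE => H [->]; rewrite H.
by apply/esym/imsetP => -[].
Qed.

Lemma sum_mm (F : nat -> nat) :
  \sum_(M | is_maximal_matching (pendant_adj f) M) F #|M| =
  \sum_(p <- filter (V d) allq) F (hsz p) * mult p.
Proof.
rewrite (eq_bigl (fun M => M \in @dec k @: [set q | V d (shq f q)])); last first.
  move=> M; apply/idP/imsetP => [/(mm_dec hd) [q Vq ->] | [q qV ->]].
    by exists q; rewrite ?inE.
  by rewrite inE in qV; apply: (dec_mm hd).
rewrite big_imset; last by move=> ? ? _ _; apply: dec_inj.
rewrite big_mkcond.
rewrite (eq_bigr (fun q => (fun p => if V d p then F (hsz p) else 0) (shq f q))); last first.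
  move=> q _; rewrite inE; case: (V d _) => //.
  by rewrite card_dec /hsz /h /shq /= count_shs.
rewrite (fiber_sum (shq f) (fun p => if V d p then F (hsz p) else 0)) sum_allq big_filter [RHS]big_mkcond.
apply: eq_bigr => p _; rewrite fiber_card; by case: (V d p).
Qed.

Lemma mult_valid p : V d p -> mult p = mw (h p).2.
Proof.
case: p => b [[[s0 s1] s2] s3] /andP[_ /and4P[_ _ H3 _]].
move: (allI H3 (isT : 0 < 4)) (allI H3 (isT : 1 < 4)) (allI H3 (isT : 2 < 4)) (allI H3 (isT : 3 < 4)); clear H3.
rewrite /mult /mw /h /=.
by case: s0 => [[]|] //; case: s1 => [[]|] //; case: s2 => [[]|] //; case: s3 => [[]|] //;
  rewrite ?cnt_None ?cnt_true.
Qed.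

Lemma sum_final (F : nat -> nat) :
  \sum_(M | is_maximal_matching (pendant_adj f) M) F #|M| =
  \sum_(z <- map h (filter (V d) allq)) F z.1 * mw z.2.
Proof.
rewrite sum_mm big_map; apply: eq_big_seq => p; rewrite mem_filter => /andP[Vp _].
by rewrite mult_valid.
Qed.

End S.

Arguments L0val : simpl never.

Section F.
Variables (k : nat) (f : 'I_k -> 'I_4).

Definition dG := [:: 0 < acnt f 0; 0 < acnt f 1; 0 < acnt f 2; 0 < acnt f 3].

Lemma hdG x : x < 4 -> nth false dG x = [exists l : 'I_k, val (f l) == x].
Proof.
have H : forall y, (0 < acnt f y) = [exists l : 'I_k, val (f l) == y].
  move=> y; apply/card_gt0P/existsP => -[l]; rewrite ?inE => hl; exists l; by rewrite ?inE.
by case: x => [|[|[|[|x]]]] // _; apply: H.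
Qed.

Lemma card_img : #|[set f i | i in 'I_k]| =
  (0 < acnt f 0) + ((0 < acnt f 1) + ((0 < acnt f 2) + ((0 < acnt f 3) + 0))).
Proof.
rewrite (_ : #|_| = #|[set x : 'I_4 | 0 < acnt f x]|).
  by rewrite (card_set_count 4 (fun x => 0 < acnt f x)); reflexivity.
apply: eq_card => x; rewrite !inE; apply/imsetP/card_gt0P => -[l].
  by move=> _ ->; exists l; rewrite inE /pf.
by rewrite inE /pf => /eqP /val_inj <-; exists l.
Qed.

Definition NN := \sum_(M | is_maximal_matching (pendant_adj f) M) 1.
Definition SS := \sum_(M | is_maximal_matching (pendant_adj f) M) #|M|.

Lemma N_eq : NN = \sum_(z <- map h (filter (Vd dG) L0val)) 1 * mw f z.2.
Proof. by rewrite /NN (sum_final hdG (fun _ => 1)) filterV. Qed.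
Lemma S_eq : SS = \sum_(z <- map h (filter (Vd dG) L0val)) z.1 * mw f z.2.
Proof. by rewrite /SS (sum_final hdG id) filterV. Qed.

End F.

Ltac compL :=
  match goal with |- context [map h (filter (Vd ?d) L0val)] =>
    let v := eval vm_compute in (map h (filter (Vd d) L0val)) in
    rewrite (_ : map h (filter (Vd d) L0val) = v); [| vm_compute; reflexivity] end.

Lemma G_ineq k (f : 'I_k -> 'I_4) : (2 <= #|[set f i | i in 'I_k]|)%N ->
  (0 < NN f) /\ (7 * NN f < 3 * SS f).
Proof.
rewrite card_img => H2.
rewrite N_eq S_eq /dG.
move: H2; rewrite /mw.
have [E0|P0] := posnP (acnt f 0); have [E1|P1] := posnP (acnt f 1);
have [E2|P2] := posnP (acnt f 2); have [E3|P3] := posnP (acnt f 3);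
rewrite ?E0 ?E1 ?E2 ?E3 ?P0 ?P1 ?P2 ?P3 // => _; compL; rewrite !big_cons !big_nil /=;
nia.
Qed.

Lemma R_ineq k' : 0 < k' ->
  (0 < NN (fun _ : 'I_k' => (ord0 : 'I_4))) /\
  (3 * SS (fun _ : 'I_k' => (ord0 : 'I_4)) < 7 * NN (fun _ : 'I_k' => (ord0 : 'I_4))).
Proof.
move=> hk.
set f := fun _ : 'I_k' => (ord0 : 'I_4).
have A0 : acnt f 0 = k'.
  rewrite /acnt (_ : [set l | _] = setT) ?cardsT ?card_ord //; by apply/setP => l; rewrite !inE.
have Ax : forall x, 0 < x -> acnt f x = 0.
  move=> x hx; rewrite /acnt (_ : [set l | _] = set0) ?cards0 //.
  by apply/setP => l; rewrite !inE /pf /=; case: x hx.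
rewrite N_eq S_eq /dG /mw A0 !Ax // hk.
compL; rewrite !big_cons !big_nil /=.
rewrite ?mul1n ?muln1 ?muln0 ?mul0n ?addn0 ?add0n.

split; lia.
Qed.

Lemma avm_eq (T : finType) (e : rel T) :
  avm e = ((\sum_(M | is_maximal_matching e M) #|M|)%N%:R /
          (\sum_(M | is_maximal_matching e M) 1)%N%:R)%R.
Proof.
rewrite /avm natr_sum; congr (_ / _%:R)%R.
rewrite -sum1_card; apply: eq_bigl => M; by rewrite inE.
Qed.

Lemma rat_ineq (a b c d : nat) : 0 < b -> 0 < d -> 3 * a < 7 * b -> 7 * d < 3 * c ->
  (a%:R / b%:R < c%:R / d%:R :> rat)%R.
Proof.
move=> hb hd h1 h2.
rewrite ltr_pdivrMr ?ltr0n // mulrC mulrA ltr_pdivlMr ?ltr0n // -!natrM ltr_nat.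
nia.
Qed.

Unset Implicit Arguments.
Local Open Scope ring_scope.

(* G = H with k >= 1 pendant edges attached according to f; n = |V(G)| = 5 + k;
   d = #|image of f| = number of vertices among v1,v2,w1,w2 receiving pendant edges. *)
Theorem lemma3p5 (n k : nat) (f : 'I_k -> 'I_4) :
  (1 <= k)%N -> n = (5 + k)%N -> (2 <= #|[set f i | i in 'I_k]|)%N ->
  avm (R33 n) < avm (pendant_adj f).
Proof.
move=> hk -> H2.
have [NG SG] := G_ineq H2.
have hk' : (0 < 5 + k - 5)%N by rewrite addKn.
have [NR SR] := R_ineq hk'.
rewrite /R33 !avm_eq.
exact: rat_ineq NR NG SR SG.
Qed.
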